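(* Let $k\in\mathbb{Z}$, let $m$ be an odd positive integer, and let $p>1$ be an odd integer. Then $$S_{p}^{(k)}(1,m)=\sum_{i=1}^{p-2}\sum_{\nu=0}^{p-i}\binom{p}{\nu}\binom{p-\nu+1}{i}E_{\nu}^{(k)}E_{i}m^{p-i}+(p+1)E_{p}+m^{p}E_{p}^{(k)}(1),$$ where $S_p^{(k)}(1,m):=m^{p}T_{p}^{(k)}(1,m)-2\sum_{\nu=0}^{p}\binom{p}{\nu}E_{\nu}^{(k)}E_{p+1-\nu}m^{\nu-1}$. Equivalently, $$m^{p}T_{p}^{(k)}(1,m)=\sum_{i=1}^{p-2}\sum_{\nu=0}^{p-i}\binom{p}{\nu}\binom{p-\nu+1}{i}E_{\nu}^{(k)}E_{i}m^{p-i}+(p+1)E_{p}+m^{p}E_{p}^{(k)}(1)+2\sum_{\nu=0}^{p}\binom{p}{\nu}E_{\nu}^{(k)}E_{p+1-\nu}m^{\nu-1}.$$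
   Context: Euler polynomials $E_n(x)$ are defined by $\frac{2}{e^t+1}e^{xt}=\sum_{n=0}^{\infty}E_n(x)\frac{t^n}{n!}$ and $E_n=E_n(0)$. For $k\in\mathbb{Z}$, $\mathrm{Ei}_k(x)=\sum_{n=1}^{\infty}\frac{x^n}{n^k(n-1)!}$; the poly-Genocchi polynomials $G_n^{(k)}(x)$ are defined by $\frac{2\,\mathrm{Ei}_k(\log(1+t))}{e^t+1}e^{xt}=\sum_{n=0}^{\infty}G_n^{(k)}(x)\frac{t^n}{n!}$; the poly-Euler polynomials are $E_n^{(k)}(x)=\frac{G_{n+1}^{(k)}(x)}{n+1}$ ($n\ge0$), $E_n^{(k)}=E_n^{(k)}(0)$, and the poly-Euler functions are $\overline{E}_n^{(k)}(x)=E_n^{(k)}(x-[x])$, where $[x]$ is the greatest integer $\le x$. For positive integers $h,m,p$, the poly-Dedekind type DC sum is $T_p^{(k)}(h,m)=2\sum_{\mu=1}^{m-1}(-1)^{\mu}\frac{\mu}{m}\overline{E}_p^{(k)}\big(\frac{h\mu}{m}\big)$. *)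

(* Defs.v *)
(* Formal power series are coefficient sequences nat -> R. *)
From mathcomp Require Import all_boot all_order all_algebra.
From mathcomp Require Import reals.
Set Implicit Arguments. Unset Strict Implicit. Unset Printing Implicit Defensive.
Import Order.TTheory GRing.Theory Num.Theory.
Local Open Scope ring_scope.

Section PS.
Variable R : realType.

Definition ps_mul (a b : nat -> R) : nat -> R :=
  fun n => \sum_(i < n.+1) a i * b (n - i)%N.

Fixpoint ps_pow (a : nat -> R) (j : nat) : nat -> R :=
  match j with
  | 0 => fun n => if n == 0%N then 1 else 0
  | j'.+1 => ps_mul a (ps_pow a j')
  end.

Fixpoint inv_seq (a : nat -> R) (n : nat) : seq R :=
  match n with
  | 0 => [:: (a 0%N)^-1]
  | n'.+1 => let s := inv_seq a n' in
     rcons s (- (a 0%N)^-1 * \sum_(j < n'.+1) a j.+1 * nth 0 s (n' - j)%N)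
  end.

Definition ps_inv (a : nat -> R) : nat -> R := fun n => nth 0 (inv_seq a n) n.

(* composition c(L(t)) for L with zero constant term *)
Definition ps_comp (c L : nat -> R) : nat -> R :=
  fun n => \sum_(j < n.+1) c j * ps_pow L j n.

Definition ps_exp (x : R) : nat -> R := fun n => x ^+ n / (n`!)%:R.
Definition ps_half_exp_plus1 : nat -> R :=
  fun n => ((n`!)%:R^-1 + (n == 0%N)%:R) / 2.
Definition ps_two_over_exp1 : nat -> R := ps_inv ps_half_exp_plus1.
Definition ps_log1p : nat -> R :=
  fun n => if n == 0%N then 0 else (-1) ^+ n.+1 / n%:R.
Definition ps_Ei (k : int) : nat -> R :=
  fun n => if n == 0%N then 0 else ((n%:R ^ k) * ((n.-1)`!)%:R)^-1.

(* Euler polynomials: 2/(e^t+1) e^{xt} = sum E_n(x) t^n/n! *)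
Definition EulerPoly (n : nat) (x : R) : R :=
  (n`!)%:R * ps_mul ps_two_over_exp1 (ps_exp x) n.
Definition EulerNum (n : nat) : R := EulerPoly n 0.

Definition polyGenocchi (k : int) (n : nat) (x : R) : R :=
  (n`!)%:R * ps_mul (ps_mul ps_two_over_exp1 (ps_comp (ps_Ei k) ps_log1p))
                    (ps_exp x) n.

Definition polyEuler (k : int) (n : nat) (x : R) : R :=
  polyGenocchi k n.+1 x / (n.+1)%:R.
Definition polyEulerNum (k : int) (n : nat) : R := polyEuler k n 0.

Definition polyEulerFun (k : int) (n : nat) (x : R) : R :=
  polyEuler k n (x - (Num.floor x)%:~R).

Definition polyDC (k : int) (p h m : nat) : R :=
  2 * \sum_(1 <= mu < m) (-1) ^+ mu * (mu%:R / m%:R)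
        * polyEulerFun k p ((h * mu)%:R / m%:R).

Definition polyS (k : int) (p m : nat) : R :=
  m%:R ^+ p * polyDC k p 1 m
  - 2 * \sum_(0 <= nu < p.+1) 'C(p, nu)%:R * polyEulerNum k nu
          * EulerNum (p.+1 - nu) * m%:R ^ (nu%:Z - 1).

End PS.

(* Main.v *)
Require Import Defs.
From mathcomp Require Import all_boot all_order all_algebra.
From mathcomp Require Import reals.
From mathcomp Require Import ring lra zify.
Set Implicit Arguments. Unset Strict Implicit. Unset Printing Implicit Defensive.
Import Order.TTheory GRing.Theory Num.Theory.
Local Open Scope ring_scope.
Definition agr {R : realType} (n : nat) (P Q : {poly R}) :=
  forall i, (i <= n)%N -> P`_i = Q`_i.

Lemma agr_refl {R : realType} n (P : {poly R}) : agr n P P.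
Proof. by []. Qed.
Lemma agr_sym {R : realType} n (P Q : {poly R}) : agr n P Q -> agr n Q P.
Proof. by move=> H i Hi; rewrite H. Qed.
Lemma agr_trans {R : realType} n (P Q S : {poly R}) :
  agr n P Q -> agr n Q S -> agr n P S.
Proof. by move=> H1 H2 i Hi; rewrite H1 ?H2. Qed.
Lemma agrM {R : realType} n (P P' Q Q' : {poly R}) :
  agr n P P' -> agr n Q Q' -> agr n (P * Q) (P' * Q').
Proof.
move=> H1 H2 i Hi; rewrite !coefM; apply: eq_bigr => j _.
have Hj : (j <= n)%N by apply: leq_trans Hi; rewrite -ltnS.
rewrite H1 // H2 //; apply: leq_trans Hi; exact: leq_subr.
Qed.
Lemma agrD {R : realType} n (P P' Q Q' : {poly R}) :
  agr n P P' -> agr n Q Q' -> agr n (P + Q) (P' + Q').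
Proof. by move=> H1 H2 i Hi; rewrite !coefD H1 ?H2. Qed.

Definition tr {R : realType} (n : nat) (a : nat -> R) : {poly R} :=
  \poly_(i < n.+1) a i.

Lemma tr_coef {R : realType} n (a : nat -> R) i : (i <= n)%N -> (tr n a)`_i = a i.
Proof. by move=> Hi; rewrite coef_poly ltnS Hi. Qed.

Lemma ps_mul_tr {R : realType} n (a b : nat -> R) i : (i <= n)%N ->
  ps_mul a b i = (tr n a * tr n b)`_i.
Proof.
move=> Hi; rewrite coefM /ps_mul; apply: eq_bigr => j _.
have Hj : (j <= n)%N by apply: leq_trans Hi; rewrite -ltnS.
rewrite !tr_coef //; apply: leq_trans Hi; exact: leq_subr.
Qed.

Lemma agr_tr_mul {R : realType} n (a b : nat -> R) :
  agr n (tr n (ps_mul a b)) (tr n a * tr n b).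
Proof. by move=> i Hi; rewrite tr_coef // (ps_mul_tr _ _ Hi). Qed.

Lemma agr_tr_ext {R : realType} n (a b : nat -> R) :
  (forall i, (i <= n)%N -> a i = b i) -> agr n (tr n a) (tr n b).
Proof. by move=> H i Hi; rewrite !tr_coef // H. Qed.

Lemma agr_tr {R : realType} n (a : nat -> R) (P : {poly R}) :
  (forall i, (i <= n)%N -> a i = P`_i) -> agr n (tr n a) P.
Proof. by move=> H i Hi; rewrite !tr_coef // H. Qed.

Lemma size_inv_seq {R : realType} (a : nat -> R) n : size (inv_seq a n) = n.+1.
Proof. by elim: n => //= n IH; rewrite size_rcons IH. Qed.

Lemma nth_inv_seq {R : realType} (a : nat -> R) n i : (i <= n)%N ->
  nth 0 (inv_seq a n) i = ps_inv a i.
Proof.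
elim: n => [|n IH] Hi; first by move: Hi; rewrite leqn0 => /eqP ->.
rewrite leq_eqVlt in Hi; case/orP: Hi => [/eqP ->|Hi]; first by [].
by rewrite /= nth_rcons size_inv_seq Hi IH.
Qed.

Lemma ps_inv_S {R : realType} (a : nat -> R) n :
  ps_inv a n.+1 = - (a 0%N)^-1 * \sum_(j < n.+1) a j.+1 * ps_inv a (n - j)%N.
Proof.
rewrite /ps_inv /= nth_rcons size_inv_seq ltnn eqxx; congr (_ * _).
apply: eq_bigr => j _; rewrite nth_inv_seq //; exact: leq_subr.
Qed.

Lemma ps_mul_inv {R : realType} (a : nat -> R) n : a 0%N != 0 ->
  ps_mul a (ps_inv a) n = (n == 0%N)%:R.
Proof.
move=> Ha; rewrite /ps_mul; case: n => [|n].
  by rewrite big_ord1 /ps_inv /= mulfV.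
rewrite big_ord_recl subn0 ps_inv_S /=.
under [X in _ + X]eq_bigr => i _ do rewrite /bump /= add1n subSS.
by rewrite mulrA mulrN mulfV // mulN1r addNr.
Qed.
Lemma ps_mulC {R : realType} (a b : nat -> R) n : ps_mul a b n = ps_mul b a n.
Proof. by rewrite (ps_mul_tr _ _ (leqnn n)) mulrC -ps_mul_tr. Qed.

Lemma ps_mulDr {R : realType} (a b c : nat -> R) n :
  ps_mul a b n + ps_mul a c n = ps_mul a (fun i => b i + c i) n.
Proof. by rewrite /ps_mul -big_split; apply: eq_bigr => i _; rewrite mulrDr. Qed.

Lemma ps_mul_ext {R : realType} (a b a' b' : nat -> R) n :
  (forall i, (i <= n)%N -> a i = a' i) -> (forall i, (i <= n)%N -> b i = b' i) ->
  ps_mul a b n = ps_mul a' b' n.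
Proof.
move=> H1 H2; apply: eq_bigr => i _.
have Hi : (i <= n)%N by rewrite -ltnS.
by rewrite H1 // H2 // leq_subr.
Qed.

Lemma half0 {R : realType} : ps_half_exp_plus1 R 0%N = 1.
Proof. by rewrite /ps_half_exp_plus1 /= invr1 mulfV // -mulr2n pnatr_eq0. Qed.

Lemma half_two {R : realType} n :
  ps_mul (ps_half_exp_plus1 R) (ps_two_over_exp1 R) n = (n == 0%N)%:R.
Proof. by rewrite ps_mul_inv // half0 oner_neq0. Qed.

Definition ps_sig {R : realType} (a : nat -> R) : nat -> R :=
  fun n => (-1) ^+ n * a n.

Lemma sig_mul {R : realType} (a b : nat -> R) n :
  ps_sig (ps_mul a b) n = ps_mul (ps_sig a) (ps_sig b) n.
Proof.
rewrite /ps_sig /ps_mul big_distrr; apply: eq_bigr => i _ /=.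
have Hi : (i <= n)%N by rewrite -ltnS.
rewrite mulrACA -exprD subnKC //.
Qed.

Lemma fact_inv {R : realType} n i : (i <= n)%N ->
  ((i`!)%:R^-1 * ((n-i)`!)%:R^-1 : R) = 'C(n,i)%:R / (n`!)%:R.
Proof.
move=> Hi; rewrite -(bin_fact Hi) !natrM.
have h1 : ((i`!)%:R : R) != 0 by rewrite pnatr_eq0 -lt0n fact_gt0.
have h2 : (((n-i)`!)%:R : R) != 0 by rewrite pnatr_eq0 -lt0n fact_gt0.
have h3 : (('C(n,i))%:R : R) != 0 by rewrite pnatr_eq0 -lt0n bin_gt0.
by field; rewrite h1 h2 h3.
Qed.

Lemma sum_alt_binom {R : realType} n :
  \sum_(i < n.+1) (-1) ^+ i * ('C(n, i))%:R = ((n == 0%N)%:R : R).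
Proof.
have := exprDn (1 : R) (-1) n; rewrite subrr expr0n => ->.
by apply: eq_bigr => i _; rewrite expr1n mul1r mulr_natr.
Qed.

Lemma F3 {R : realType} n :
  ps_mul (ps_sig (ps_half_exp_plus1 R)) (ps_exp 1) n = ps_half_exp_plus1 R n.
Proof.
rewrite /ps_mul /ps_sig /ps_half_exp_plus1 /ps_exp.
under eq_bigr => i _ do rewrite expr1n mul1r mulrDl mulrDr mulrDl.
rewrite big_split /=.
have -> : \sum_(i < n.+1) (-1) ^+ i * ((i == 0%N :> nat)%:R / 2) / ((n - i)`!)%:R
   = (((n`!)%:R)^-1 / 2 : R).
  rewrite big_ord_recl big1 => [|i _]; first by rewrite subn0 /=; ring.
  by rewrite /bump /= mul0r mulr0 mul0r.
have -> : \sum_(i < n.+1) (-1) ^+ i * ((i`!)%:R^-1 / 2) / ((n - i)`!)%:R =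
   ((\sum_(i < n.+1) (-1) ^+ i * 'C(n, i)%:R) / (n`!)%:R / 2 : R).
  rewrite big_distrl big_distrl /=; apply: eq_bigr => i _.
  have Hi : (i <= n)%N by rewrite -ltnS.
  have -> : (-1) ^+ i * ('C(n, i))%:R / (n`!)%:R / 2 =
     (-1) ^+ i * (('C(n, i))%:R / (n`!)%:R) / 2 :> R by ring.
  rewrite -(@fact_inv R _ _ Hi); ring.
rewrite sum_alt_binom; case: n => [|n] /=; first by rewrite invr1; ring.
by rewrite mul0r mul0r add0r; ring.
Qed.

Lemma F4 {R : realType} n :
  @ps_exp R 1 n = 2 * ps_half_exp_plus1 R n - (n == 0%N)%:R.
Proof.
rewrite /ps_exp /ps_half_exp_plus1 expr1n mul1r mulrC mulfVK ?pnatr_eq0 //.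
by rewrite addrK.
Qed.

Lemma F5 {R : realType} (x : R) n :
  ps_exp (x + 1) n + ps_exp x n = 2 * ps_mul (ps_half_exp_plus1 R) (ps_exp x) n.
Proof.
rewrite /ps_mul /ps_half_exp_plus1 /ps_exp.
under eq_bigr => i _ do rewrite mulrDl mulrDl.
rewrite big_split /=.
have -> : \sum_(i < n.+1) (i == 0%N :> nat)%:R / 2 * (x ^+ (n - i) / ((n - i)`!)%:R)
   = (x ^+ n / (n`!)%:R / 2 : R).
  rewrite big_ord_recl big1 => [|i _]; first by rewrite subn0 /=; ring.
  by rewrite /bump /= mul0r mul0r.
rewrite exprDn big_distrl /= mulrDr.
congr (_ + _); last by rewrite [RHS]mulrC divfK // pnatr_eq0.
rewrite big_distrr /=; apply: eq_bigr => i _.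
have Hi : (i <= n)%N by rewrite -ltnS.
rewrite expr1n mulr1 -mulr_natr.
have -> : x ^+ (n - i) * ('C(n, i))%:R / (n`!)%:R =
   x ^+ (n - i) * (('C(n, i))%:R / (n`!)%:R) :> R by ring.
rewrite -(@fact_inv R _ _ Hi); field.
by rewrite !pnatr_eq0 -!lt0n !fact_gt0.
Qed.

Lemma F6 {R : realType} (a : nat -> R) n : ps_mul a (ps_exp 0) n = a n.
Proof.
rewrite /ps_mul /ps_exp big_ord_recr /= subnn expr0 invr1 !mulr1 big1 ?add0r //.
move=> i _; rewrite expr0n subn_eq0 leqNgt ltn_ord /= mul0r mulr0 //.
Qed.
Lemma agr1 {R : realType} n (P : {poly R}) :
  (forall i, (i <= n)%N -> P`_i = (i == 0%N)%:R) -> agr n P 1.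
Proof. by move=> H i Hi; rewrite H // coef1. Qed.

Lemma ps_mulA_tr {R : realType} (a b c : nat -> R) n :
  ps_mul a (ps_mul b c) n = (tr n a * (tr n b * tr n c))`_n.
Proof.
rewrite (ps_mul_tr _ _ (leqnn n)); apply: agrM (leqnn n) => //.
exact: agr_tr_mul.
Qed.

Lemma sig_two {R : realType} n :
  ps_sig (ps_two_over_exp1 R) n = ps_mul (ps_two_over_exp1 R) (ps_exp 1) n.
Proof.
set Tw := tr n (ps_two_over_exp1 R); set H := tr n (ps_half_exp_plus1 R).
set Hs := tr n (ps_sig (ps_half_exp_plus1 R)).
set Ts := tr n (ps_sig (ps_two_over_exp1 R)); set X1 := tr n (@ps_exp R 1).
have h1 : agr n (H * Tw) 1.
  by apply: agr1 => i Hi; rewrite -(ps_mul_tr _ _ Hi) half_two.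
have h2 : agr n (Hs * Ts) 1.
  apply: agr1 => i Hi; rewrite -(ps_mul_tr _ _ Hi) -sig_mul /ps_sig half_two.
  by case: i {Hi} => [|i]; rewrite ?expr0 ?mul1r // mulr0.
have h3 : agr n (Hs * X1) H.
  by apply: agr_sym; apply: agr_tr => i Hi; rewrite -(ps_mul_tr _ _ Hi) F3.
rewrite (ps_mul_tr _ _ (leqnn n)) -[LHS](@tr_coef R n) //.
have : agr n Ts (Tw * X1).
  apply: (@agr_trans _ _ _ (Ts * (H * Tw))).
    by rewrite -[X in agr _ X _]mulr1; apply: agrM => //; apply: agr_sym.
  apply: (@agr_trans _ _ _ (Ts * ((Hs * X1) * Tw))).
    by apply: agrM => //; apply: agrM => //; apply: agr_sym.
  have -> : Ts * ((Hs * X1) * Tw) = (Hs * Ts) * (Tw * X1) by ring.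
  by rewrite -[X in agr _ _ X]mul1r; apply: agrM.
by move/(_ n (leqnn n)).
Qed.

Lemma ps_mulZr {R : realType} (a b : nat -> R) (c : R) n :
  ps_mul a (fun i => c * b i) n = c * ps_mul a b n.
Proof. by rewrite /ps_mul big_distrr; apply: eq_bigr => i _ /=; ring. Qed.

Lemma EulerPoly_shift {R : realType} n (x : R) :
  EulerPoly n (x + 1) + EulerPoly n x = 2 * x ^+ n.
Proof.
rewrite /EulerPoly -mulrDr ps_mulDr.
rewrite (@ps_mul_ext _ _ _ (ps_two_over_exp1 R)
   (fun i => 2 * ps_mul (ps_half_exp_plus1 R) (ps_exp x) i)) //; last first.
  by move=> i _; rewrite F5.
rewrite ps_mulZr ps_mulA_tr mulrA.
have : agr n (tr n (ps_two_over_exp1 R) * (tr n (ps_half_exp_plus1 R) * tr n (ps_exp x)))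
             (tr n (ps_exp x)).
  rewrite mulrA [X in X * _]mulrC -[X in agr _ _ X]mul1r; apply: agrM => //.
  by apply: agr1 => i Hi; rewrite -(ps_mul_tr _ _ Hi) half_two.
move/(_ n (leqnn n)) => ->; rewrite tr_coef // /ps_exp.
have h3 : (((n)`!)%:R : R) != 0 by rewrite pnatr_eq0 -lt0n fact_gt0.
by field.
Qed.

Lemma EulerNumE {R : realType} n : EulerNum R n = (n`!)%:R * ps_two_over_exp1 R n.
Proof. by rewrite /EulerNum /EulerPoly F6. Qed.

Lemma EulerPoly1 {R : realType} n : EulerPoly n (1 : R) = (-1) ^+ n * EulerNum R n.
Proof.
by rewrite /EulerPoly -sig_two EulerNumE /ps_sig mulrCA.
Qed.

Lemma EulerNum_even {R : realType} n : (0 < n)%N -> ~~ odd n -> EulerNum R n = 0.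
Proof.
move=> Hn Ho; have := @EulerPoly_shift R n 0.
rewrite add0r EulerPoly1 -signr_odd (negbTE Ho) expr0 mul1r expr0n.
rewrite -[n == 0%N]negbK -lt0n Hn /= mulr0 -/(EulerNum R n).
move=> /eqP; rewrite addr_eq0 => /eqP H.
have : 2 * EulerNum R n = 0 by rewrite mulr2n mulrDl !mul1r {1}H addNr.
by move/eqP; rewrite mulf_eq0 pnatr_eq0 /= => /eqP.
Qed.

Lemma appell {R : realType} (c : nat -> R) (x : R) n :
  (n`!)%:R * ps_mul c (ps_exp x) n =
  \sum_(i < n.+1) ('C(n, i))%:R * ((i`!)%:R * c i) * x ^+ (n - i).
Proof.
rewrite /ps_mul /ps_exp big_distrr; apply: eq_bigr => i _ /=.
have Hi : (i <= n)%N by rewrite -ltnS.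
have := @fact_inv R _ _ Hi => H.
have h1 : ((i`!)%:R : R) != 0 by rewrite pnatr_eq0 -lt0n fact_gt0.
have h2 : (((n-i)`!)%:R : R) != 0 by rewrite pnatr_eq0 -lt0n fact_gt0.
have h3 : (((n)`!)%:R : R) != 0 by rewrite pnatr_eq0 -lt0n fact_gt0.
have -> : ('C(n, i))%:R = (i`!)%:R^-1 * ((n - i)`!)%:R^-1 * (n`!)%:R :> R.
  by rewrite H divfK.
by field; rewrite h1 h2.
Qed.

Lemma EulerPoly_appell {R : realType} n (x : R) :
  EulerPoly n x = \sum_(i < n.+1) ('C(n, i))%:R * EulerNum R i * x ^+ (n - i).
Proof. by rewrite /EulerPoly appell; apply: eq_bigr => i _; rewrite EulerNumE. Qed.

Lemma EulerNum0 {R : realType} : EulerNum R 0 = 1.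
Proof.
by rewrite EulerNumE /ps_two_over_exp1 /ps_inv /= half0 invr1 mul1r.
Qed.

Lemma alt_sum_gen {R : realType} n m :
  2 * \sum_(i < m) (-1) ^+ i * (i%:R : R) ^+ n =
  EulerNum R n - (-1) ^+ m * EulerPoly n (m%:R : R).
Proof.
elim: m => [|m IH]; first by rewrite big_ord0 mulr0 expr0 mul1r /EulerNum subrr.
rewrite big_ord_recr /= mulrDr IH -[(m.+1)%:R]natr1.
have := @EulerPoly_shift R n m%:R => H.
rewrite exprS.
have -> : EulerPoly n (m%:R + 1) = 2 * (m%:R : R) ^+ n - EulerPoly n m%:R.
  by rewrite -H addrK.
ring.
Qed.
Definition pc {R : realType} (k : int) : nat -> R :=
  ps_mul (ps_two_over_exp1 R) (ps_comp (ps_Ei R k) (ps_log1p R)).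

Lemma pc0 {R : realType} k : @pc R k 0 = 0.
Proof.
by rewrite /pc /ps_mul big_ord1 /ps_comp big_ord1 /ps_Ei /= !mul0r mulr0.
Qed.

Lemma polyEuler_shift {R : realType} k n (x : R) :
  polyEuler k n x = (n`!)%:R * ps_mul (fun j => @pc R k j.+1) (ps_exp x) n.
Proof.
rewrite /polyEuler /polyGenocchi -/(pc k) {1}/ps_mul big_ord_recl pc0 mul0r add0r.
have hn : (n.+1%:R : R) != 0 by rewrite pnatr_eq0.
have E : forall a b c : R, a != 0 -> a * b * c / a = b * c.
  by move=> a b c ha; field.
rewrite factS natrM E //.
Qed.

Lemma polyEulerNumE {R : realType} k i :
  polyEulerNum R k i = (i`!)%:R * @pc R k i.+1.
Proof. by rewrite /polyEulerNum polyEuler_shift F6. Qed.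

Lemma polyEuler_appell {R : realType} k n (x : R) :
  polyEuler k n x =
  \sum_(i < n.+1) ('C(n, i))%:R * polyEulerNum R k i * x ^+ (n - i).
Proof.
by rewrite polyEuler_shift appell; apply: eq_bigr => i _; rewrite polyEulerNumE.
Qed.

Lemma comp0 {R : realType} k : ps_comp (ps_Ei R k) (ps_log1p R) 0 = 0.
Proof. by rewrite /ps_comp big_ord1 /ps_Ei /= mul0r. Qed.

Lemma two0 {R : realType} : ps_two_over_exp1 R 0 = 1.
Proof. by rewrite /ps_two_over_exp1 /ps_inv /= half0 invr1. Qed.

Lemma comp1 {R : realType} k : ps_comp (ps_Ei R k) (ps_log1p R) 1 = 1.
Proof.
rewrite /ps_comp big_ord_recr big_ord1 /= {1}/ps_Ei /= mul0r add0r.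
rewrite /ps_mul big_ord_recr big_ord1 /= /ps_log1p /= mul0r add0r.
rewrite /ps_Ei /= exp1rz mul1r fact0 sqrrN expr1n; by field.
Qed.

Lemma polyEulerNum0 {R : realType} k : polyEulerNum R k 0 = 1.
Proof.
rewrite polyEulerNumE mul1r /pc /ps_mul big_ord_recr big_ord1 /=.
by rewrite subnn comp0 mulr0 addr0 two0 comp1 mulr1.
Qed.
Lemma tri_inner {R : realType} (F : nat -> nat -> R) p nu : (nu <= p)%N ->
  \sum_(0 <= i < (p - nu).+1) F nu i =
  \sum_(0 <= i < p.+1) (if (nu + i <= p)%N then F nu i else 0).
Proof.
move=> Hnu; rewrite (@big_nat_widen _ _ _ 0 _ p.+1) ?ltnS ?leq_subr //.
rewrite big_mkcond; apply: eq_big_nat => i Hi /=.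
have -> : (i < (p - nu).+1)%N = (nu + i <= p)%N.
  by apply/idP/idP => H; lia.
by [].
Qed.

Lemma tri_swap {R : realType} (F : nat -> nat -> R) p :
  \sum_(0 <= nu < p.+1) \sum_(0 <= i < (p - nu).+1) F nu i =
  \sum_(0 <= i < p.+1) \sum_(0 <= nu < (p - i).+1) F nu i.
Proof.
rewrite (@eq_big_nat _ _ _ 0 p.+1 _
   (fun nu => \sum_(0 <= i < p.+1) (if (nu + i <= p)%N then F nu i else 0))); last first.
  by move=> nu Hnu; apply: tri_inner; lia.
rewrite [RHS](@eq_big_nat _ _ _ 0 p.+1 _
   (fun i => \sum_(0 <= nu < p.+1) (if (i + nu <= p)%N then F nu i else 0))); last first.
  by move=> i Hi; apply: (@tri_inner R (fun a b => F b a)); lia.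
rewrite exchange_big_nat; apply: eq_big_nat => i Hi; apply: eq_big_nat => nu Hnu.
by rewrite addnC.
Qed.
Lemma polyEulerFun_frac {R : realType} k p (mu m : nat) : (mu < m)%N ->
  polyEulerFun k p (mu%:R / m%:R : R) = polyEuler k p (mu%:R / m%:R).
Proof.
move=> Hmu; rewrite /polyEulerFun.
have Hm : (0 < m%:R :> R) by rewrite ltr0n; lia.
have -> : Num.floor (mu%:R / m%:R : R) = 0.
  apply: floor_def; rewrite add0r /= mulr0z mulr1z.
  rewrite divr_ge0 ?ler0n //= ltr_pdivrMr // mul1r ltr_nat //.
by rewrite mulr0z subr0.
Qed.

Lemma alt_sum_odd {R : realType} n m : odd m ->
  2 * \sum_(i < m) (-1) ^+ i * (i%:R : R) ^+ n =
  2 * EulerNum R n + \sum_(i < n) ('C(n, i))%:R * EulerNum R i * (m%:R : R) ^+ (n - i).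
Proof.
move=> Hm; rewrite alt_sum_gen -signr_odd Hm expr1 mulN1r opprK.
rewrite EulerPoly_appell big_ord_recr /= binn subnn expr0 mulr1 mul1r.
ring.
Qed.

Lemma step2 {R : realType} k p m : (0 < m)%N ->
  (m%:R : R) ^+ p * polyDC R k p 1 m =
  2 * \sum_(nu < p.+1) ('C(p, nu))%:R * polyEulerNum R k nu * ((m%:R : R) ^+ nu / m%:R)
      * \sum_(mu < m) (-1) ^+ mu * (mu%:R : R) ^+ (p - nu + 1).
Proof.
move=> Hm0.
have HM : (m%:R : R) != 0 by rewrite pnatr_eq0 -lt0n.
rewrite /polyDC.
have -> : \sum_(1 <= mu < m) (-1) ^+ mu * ((mu%:R : R) / m%:R) *
            polyEulerFun k p ((1 * mu)%:R / m%:R)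
   = \sum_(mu < m) (-1) ^+ mu * ((mu%:R : R) / m%:R) * polyEuler k p (mu%:R / m%:R).
  rewrite -(big_mkord xpredT (fun mu => (-1) ^+ mu * ((mu%:R : R) / m%:R) *
            polyEuler k p (mu%:R / m%:R))).
  rewrite (big_ltn Hm0) mul0r mulr0 mul0r add0r.
  by apply: eq_big_nat => mu Hmu; rewrite mul1n polyEulerFun_frac //; case/andP: Hmu.
rewrite mulrCA; congr (2 * _).
rewrite big_distrr /=.
under eq_bigr => mu _ do rewrite polyEuler_appell big_distrr big_distrr /=.
rewrite exchange_big /=; apply: eq_bigr => nu _.
rewrite big_distrr /=; apply: eq_bigr => mu _.
have Hnu : (nu <= p)%N by rewrite -ltnS.
have HMp : (m%:R : R) ^+ (p - nu) != 0 by rewrite expf_neq0.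
rewrite -{1}(subnKC Hnu) exprD addn1 exprSr expr_div_n.
by field; rewrite HMp HM.
Qed.
Lemma expz_pred {R : realType} (x : R) (n : nat) : x != 0 ->
  x ^ (n%:Z - 1) = x ^+ n / x.
Proof. by move=> hx; rewrite expfzDr. Qed.

Definition fterm {R : realType} k p m (nu i : nat) : R :=
  'C(p, nu)%:R * 'C(p - nu + 1, i)%:R * polyEulerNum R k nu
            * EulerNum R i * (m%:R : R) ^+ (p - i).

Lemma polyS_tri {R : realType} k p m : (0 < m)%N -> odd m ->
  polyS R k p m = \sum_(0 <= nu < p.+1) \sum_(0 <= i < (p - nu).+1) fterm k p m nu i.
Proof.
move=> Hm0 Hmo.
have HM : (m%:R : R) != 0 by rewrite pnatr_eq0 -lt0n.
rewrite /polyS step2 // big_distrr /= big_distrr /= big_mkord -sumrB.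
rewrite [RHS]big_mkord; apply: eq_bigr => nu _.
have Hnu : (nu <= p)%N by rewrite -ltnS.
rewrite mulrCA alt_sum_odd // mulrDr big_distrr /= expz_pred // subSn // -[(p - nu).+1]addn1.
have -> : \sum_(i < p - nu + 1)
     'C(p, nu)%:R * polyEulerNum R k nu * ((m%:R : R) ^+ nu / m%:R) *
     ('C(p - nu + 1, i)%:R * EulerNum R i * (m%:R : R) ^+ (p - nu + 1 - i)) =
   \sum_(i < p - nu + 1) fterm k p m nu i.
  apply: eq_bigr => i _; rewrite /fterm.
  have Hi : (i < p - nu + 1)%N by [].
  have -> : (m%:R : R) ^+ (p - nu + 1 - i) = (m%:R : R) ^+ (p - i) * m%:R / (m%:R) ^+ nu.
    have E : (nu + (p - nu + 1 - i) = (p - i).+1)%N by lia.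
    have HMn : (m%:R : R) ^+ nu != 0 by rewrite expf_neq0.
    apply: (mulIf HMn); rewrite divfK // mulrC -exprD E exprSr //.
  have HMn : (m%:R : R) ^+ nu != 0 by rewrite expf_neq0.
  by field; rewrite HMn HM.
rewrite big_mkord addn1; ring.
Qed.
Theorem theorem11 (R : realType) (k : int) (m p : nat) :
  (0 < m)%N -> odd m -> (1 < p)%N -> odd p ->
  @polyS R k p m =
    \sum_(1 <= i < p.-1)
       \sum_(0 <= nu < (p - i).+1)
          'C(p, nu)%:R * 'C(p - nu + 1, i)%:R * @polyEulerNum R k nu
            * @EulerNum R i * m%:R ^+ (p - i)
    + (p.+1)%:R * @EulerNum R p + m%:R ^+ p * @polyEuler R k p 1.
Proof.
move=> Hm0 Hmo Hp1 Hpo.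
rewrite polyS_tri // tri_swap.
have [q Hq] : exists q, p = q.+2 by exists p.-2; lia.
subst p.
rewrite [LHS]big_nat_recr // [X in X + _ = _]big_nat_recr // [X in X + _ + _ = _]big_ltn //.
have -> : \sum_(0 <= nu < (q.+2 - q.+1).+1) fterm k q.+2 m nu q.+1 = 0 :> R.
  have Hev : ~~ odd q.+1 by move: Hpo => /=.
  apply: big1 => nu _; rewrite /fterm (@EulerNum_even R q.+1) //.
  by rewrite mulr0 mul0r.
have -> : \sum_(0 <= nu < (q.+2 - q.+2).+1) fterm k q.+2 m nu q.+2 =
          (q.+3)%:R * EulerNum R q.+2 :> R.
  rewrite subnn big_nat1 /fterm bin0 subn0 addn1 binSn polyEulerNum0 subnn expr0.
  by rewrite mulr1 mul1r mulr1.
have -> : \sum_(0 <= nu < (q.+2 - 0).+1) fterm k q.+2 m nu 0 =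
          (m%:R : R) ^+ q.+2 * polyEuler k q.+2 1.
  rewrite polyEuler_appell big_distrr /= subn0 big_mkord; apply: eq_bigr => nu _.
  by rewrite /fterm bin0 EulerNum0 subn0 expr1n; ring.
rewrite /fterm /=; ring.
Qed.
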